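(* Let $(X,\mathcal{A})$ be a resolvable design with $v$ points, $b$ blocks of size $k$, $r$ parallel classes and $b_r=b/r$ blocks per parallel class. Consider the coded caching system with $N$ files, $b$ caches each of size $M=Nk/v$ files, and $K=b$ users each having access to exactly one cache (user $j$ to the cache of block $A_j$), with the placement and delivery described in the context. If $N\geq K$ and the demands are distinct, the scheme achieves the worst-case rate $R=\frac{rk\binom{b_r}{2}}{v}$, and the number of users benefited in each transmission (the gain) is $2$.
   Context: A resolvable design $(X,\mathcal{A})$: $X$ a finite set of $v$ points, $\mathcal{A}$ a collection of $b$ blocks each of size $k$, partitioned into $r$ parallel classes, each being a set of $b_r=v/k$ pairwise disjoint blocks with union $X$. Placement: each file $W_i$ ($i\in[N]$, unit size) is split into $v$ equal subfiles $W_{i,x}$, $x\in X$; the cache of block $A_j$ stores $W_{i,x}$ for all $x\in A_j$ and all $i$. Delivery: user $m$ demands $W_{d_m}$. For each parallel class and each pair of distinct blocks $C_{i},C_{j}$ in it, let the users of these two caches be $m$ (cache $C_i$) and $m'$ (cache $C_j$); set $f_m=C_j=\{y_{m,1},\dots,y_{m,k}\}$ and $f_{m'}=C_i=\{y_{m',1},\dots,y_{m',k}\}$ (fixed orderings), and transmit $W_{d_m,y_{m,s}}\oplus W_{d_{m'},y_{m',s}}$ for each $s\in[k]$, each of size $1/v$ file. The rate is the total amount transmitted in units of files; a user is benefited by a transmission if it obtains a subfile of its demanded file from it. *)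

(* Defs.v *)
From mathcomp Require Import all_boot all_order all_algebra.
Set Implicit Arguments. Unset Strict Implicit. Unset Printing Implicit Defensive.

(* Points: a finite type X (v = #|X|).  Blocks / caches / users indexed by 'I_b.
   Parallel classes indexed by 'I_r; cls j is the parallel class of block A j. *)
Definition resolvable_design (X : finType) (b r k br : nat)
  (A : 'I_b -> {set X}) (cls : 'I_b -> 'I_r) : Prop :=
  [/\ (forall j, #|A j| = k),
      (forall c : 'I_r, #|[set j | cls j == c]| = br),
      (forall i j, i != j -> cls i = cls j -> [disjoint A i & A j]) &
      (forall (c : 'I_r) (x : X), exists j, cls j = c /\ x \in A j)].

(* y j : 'I_k -> X is a fixed ordering of the k points of block A j. *)
Definition valid_orderings (X : finType) (b k : nat)
  (A : 'I_b -> {set X}) (y : 'I_b -> 'I_k -> X) : Prop :=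
  forall j, injective (y j) /\ (forall s, y j s \in A j).

(* A subfile W_{i,x} is labelled by (i, x); a transmission W_p (+) W_q by (p, q). *)
Definition subfile (N : nat) (X : finType) := ('I_N * X)%type.
Definition transmission (N : nat) (X : finType) := (subfile N X * subfile N X)%type.

(* Delivery: for each parallel class c, each unordered pair of distinct blocks
   C_i, C_j (i < j) of class c, users m = i (cache C_i) and m' = j (cache C_j),
   f_m = C_j, f_m' = C_i, and for each s send W_{d_m, y_{m,s}} (+) W_{d_m', y_{m',s}}. *)
Definition delivery (X : finType) (b r k N : nat) (cls : 'I_b -> 'I_r)
  (y : 'I_b -> 'I_k -> X) (d : 'I_b -> 'I_N) : seq (transmission N X) :=
  flatten [seq
    flatten [seq [seq ((d p.1, y p.2 s), (d p.2, y p.1 s)) | s <- enum 'I_k]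
            | p <- [seq p <- [seq (i, j) | i <- enum 'I_b, j <- enum 'I_b]
                      | [&& cls p.1 == c, cls p.2 == c & (p.1 < p.2)%N]]]
    | c <- enum 'I_r].

(* Rate: total transmitted amount in files; each transmission has size 1/v. *)
Definition rate (X : finType) (N : nat) (T : seq (transmission N X)) : rat :=
  ((size T)%:R / (#|X|)%:R)%R.

(* User m (with cache A m, storing W_{i,x} for all i and x in A m) decodes the
   subfile sf from transmission t if sf is one summand of t and the other summand
   is in its cache. *)
Definition decodes (X : finType) (b N : nat) (A : 'I_b -> {set X}) (m : 'I_b)
  (t : transmission N X) (sf : subfile N X) : bool :=
  ((t.1 == sf) && (t.2.2 \in A m)) || ((t.2 == sf) && (t.1.2 \in A m)).

Definition benefited (X : finType) (b N : nat) (A : 'I_b -> {set X})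
  (d : 'I_b -> 'I_N) (m : 'I_b) (t : transmission N X) : bool :=
  [exists x, (x \notin A m) && decodes A m t (d m, x)].

(* Main.v *)
Require Import Defs.
From mathcomp Require Import all_boot all_order all_algebra.
From mathcomp Require Import zify.

Lemma sumn_const (T : Type) (s : seq T) (f : T -> nat) a :
  (forall x, f x = a) -> sumn (map f s) = size s * a.
Proof. by move=> h; elim: s => //= x s ->; rewrite h mulSn. Qed.

Lemma count_pairs (b : nat) (f : pred ('I_b * 'I_b)) :
  size [seq p <- [seq (i, j) | i <- enum 'I_b, j <- enum 'I_b] | f p] = #|[set p | f p]|.
Proof.
have -> : #|[set p | f p]| = #|f| by apply: eq_card => p; rewrite inE.
rewrite size_filter unlock size_filter unlock /=.
by [].
Qed.


Lemma pairs_count (b : nat) (S : {set 'I_b}) :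
  #|[set p : 'I_b * 'I_b | [&& p.1 \in S, p.2 \in S & (p.1 < p.2)%N]]| = 'C(#|S|, 2).
Proof.
set L := [set p : 'I_b * 'I_b | _].
set S2 := setX S S.
set P := [set p : 'I_b * 'I_b | (p.1 < p.2)%N].
set Q := [set p : 'I_b * 'I_b | p.1 == p.2].
have h1 := cardsID P S2.
have h2 := cardsID Q (S2 :\: P).
have eL : S2 :&: P = L by apply/setP => -[i j]; rewrite !inE /= andbA.
have eG : (S2 :\: P) :\: Q = [set (p.2, p.1) | p in L].
  apply/setP => -[i j]; rewrite !inE /=; apply/idP/imsetP.
    move=> /andP[ne /andP[nl /andP[iS jS]]]; exists (j, i); rewrite // !inE /= jS iS /=.
    by rewrite ltn_neqAle eq_sym ne leqNgt.
  case=> -[i' j']; rewrite !inE /= => /and3P[iS jS lt] [-> ->].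
  by rewrite iS jS /= -leqNgt (ltnW lt) neq_ltn lt orbT.
have eE : (S2 :\: P) :&: Q = [set (i, i) | i in S].
  apply/setP => -[i j]; rewrite !inE /=; apply/idP/imsetP.
    by move=> /andP[/and3P[_ iS _] /eqP e]; exists i => //; rewrite e.
  by case=> k kS [-> ->]; rewrite kS eqxx ltnn.
rewrite eG card_imset in h2; last by move=> [? ?] [? ?] [-> ->].
rewrite eE card_imset in h2; last by move=> ? ? [].
rewrite eL cardsX -h2 in h1.
rewrite bin2.
set n := #|S| in h1 *; set l := #|L| in h1 *.
have -> : n * n.-1 = l.*2.
  case: n h1 => [|n] h1 /=; nia.
by rewrite doubleK.
Qed.

Theorem theorem2 (X : finType) (b r k br N : nat)
  (A : 'I_b -> {set X}) (cls : 'I_b -> 'I_r) (y : 'I_b -> 'I_k -> X)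
  (d : 'I_b -> 'I_N) :
  @resolvable_design X b r k br A cls ->
  valid_orderings A y ->
  (b <= N)%N ->
  injective d ->
  let T := delivery cls y d in
  [/\ rate T = ((r * k * 'C(br, 2))%:R / (#|X|)%:R)%R,
      (forall (m : 'I_b) (x : X),
          x \in A m \/ exists2 t, t \in T & decodes A m t (d m, x)) &
      (forall t, t \in T -> #|[set m | benefited A d m t]| = 2)].
Proof.
move=> [hA hcls hdisj hcov] hy _ dinj T.
have surj : forall j x, x \in A j -> exists s, y j s = x.
  move=> j x xj.
  have eqc : #|y j @: [set: 'I_k]| = #|A j|.
    by rewrite card_imset ?cardsT ?card_ord ?hA //; case: (hy j).
  have sub : y j @: [set: 'I_k] \subset A j.
    by apply/subsetP => _ /imsetP[s _ ->]; case: (hy j).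
  have := (subset_cardP eqc sub) x; rewrite xj => /imsetP[s _ ->]; by exists s.
split.
- rewrite /rate; congr (_ / _)%R; congr (_ %:R)%R.
  rewrite /T /delivery size_flatten /shape -map_comp -mulnA.
  rewrite (@sumn_const _ _ _ (k * 'C(br, 2))) ?size_enum_ord // => c /=.
  rewrite size_flatten /shape -map_comp (@sumn_const _ _ _ k); last first.
    by move=> p /=; rewrite size_map size_enum_ord.
  rewrite count_pairs mulnC; congr (_ * _).
  rewrite -(hcls c) -pairs_count; apply: eq_card => p; rewrite !inE //.
- move=> m x; case: (boolP (x \in A m)) => xA; [by left | right].
  have [j [cj xj]] := hcov (cls m) x.
  have [s ys] := surj j x xj.
  have ja : y m s \in A m by case: (hy m).
  case: (ltngtP m j) => [lt|gt|eq].
  + exists ((d m, y j s), (d j, y m s)); last by rewrite /decodes /= ys eqxx ja.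
    apply/flatten_mapP; exists (cls m); first by rewrite mem_enum.
    apply/flatten_mapP; exists (m, j).
      rewrite mem_filter /= cj eqxx lt /=; apply/allpairsP; exists (m, j).
      by rewrite !mem_enum.
    by apply/mapP; exists s; rewrite ?mem_enum.
  + exists ((d j, y m s), (d m, y j s)); last by rewrite /decodes /= ys eqxx ja orbT.
    apply/flatten_mapP; exists (cls m); first by rewrite mem_enum.
    apply/flatten_mapP; exists (j, m).
      rewrite mem_filter /= cj eqxx gt /=; apply/allpairsP; exists (j, m).
      by rewrite !mem_enum.
    by apply/mapP; exists s; rewrite ?mem_enum.
  + have emj : m = j by apply: val_inj.
    by move: xA; rewrite emj xj.
- move=> t /flatten_mapP[c _ /flatten_mapP[[i j] + /mapP[s _ ->]]].
  rewrite mem_filter /= => /andP[/and3P[/eqP ci /eqP cj lt] _].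
  have ij : i != j by rewrite neq_ltn lt.
  have hd := hdisj i j ij (etrans ci (esym cj)).
  have yiA : y i s \in A i by case: (hy i).
  have yjA : y j s \in A j by case: (hy j).
  have n1 : y j s \in A i = false by apply: (disjointFl hd).
  have n2 : y i s \in A j = false by apply: (disjointFr hd).
  have -> : [set m | benefited A d m ((d i, y j s), (d j, y i s))] = [set i; j].
    apply/setP => m; rewrite !inE /benefited; apply/idP/idP.
      case/existsP => x /andP[_]; rewrite /decodes /=.
      case/orP => /andP[/eqP [e _] _]; by rewrite -(dinj _ _ e) eqxx ?orbT.
    case/orP => /eqP ->; apply/existsP; [exists (y j s) | exists (y i s)];
      by rewrite /decodes /= ?n1 ?n2 ?yiA ?yjA eqxx ?orbT.
  by rewrite cards2 ij.
Qed.
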